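(* Let $\mathcal H$ be an $n$-vertex linear hypergraph and let $t := e(\mathcal H) - n$. If $e_1,\dots,e_{2t} \in \mathcal H$ are distinct, pairwise intersecting edges such that $\{e_{2i-1},e_{2i}\}$ is a useful pair for each $i\in[t]$, then $\mathcal H$ has a proper edge-colouring with $n$ colours in which each colour is assigned to at most two edges.
   Context: A hypergraph has a finite vertex set and a set of nonempty edges; linear means any two distinct edges share at most one vertex; $e(\mathcal H)$ is the number of edges. For an edge $e$, $N(e)$ denotes the set of edges $f \ne e$ of $\mathcal H$ with $f\cap e\neq\varnothing$. In an $n$-vertex hypergraph, a pair $\{e,f\}\subseteq\mathcal H$ is useful if $e\ne f$, $e\cap f\ne\varnothing$, and $|N(e)\cap N(f)| \le n-2$. A proper edge-colouring assigns colours to edges so that distinct intersecting edges get different colours. *)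

(* Defs.v *)
From mathcomp Require Import all_boot.
Set Implicit Arguments. Unset Strict Implicit. Unset Printing Implicit Defensive.

Section Hyper.
Variable V : finType.
Implicit Types (H : {set {set V}}) (e f : {set V}).

Definition hypergraph H : Prop := forall e, e \in H -> e != set0.

Definition linear H : Prop :=
  forall e f, e \in H -> f \in H -> e != f -> #|e :&: f| <= 1.

Definition nbhd H e : {set {set V}} :=
  [set f in H | (f != e) && (f :&: e != set0)].

(* useful pair in an n-vertex hypergraph, n = #|V|;
   |N(e) ∩ N(f)| <= n - 2 written as |N(e) ∩ N(f)| + 2 <= n (no truncation) *)
Definition useful_pair H e f : Prop :=
  [/\ e \in H, f \in H, e != f, e :&: f != set0 &
      #|nbhd H e :&: nbhd H f| + 2 <= #|V|].

Definition proper_colouring H (k : nat) (c : {set V} -> nat) : Prop :=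
  (forall e, e \in H -> c e < k) /\
  (forall e f, e \in H -> f \in H -> e != f -> e :&: f != set0 -> c e != c f).
End Hyper.

(* Main.v *)
Require Import Defs.
From mathcomp Require Import all_boot zify.

Lemma greedy (T : finType) (x0 : T) (C : nat -> {set T}) (t : nat) :
  (forall i, i < t -> t <= #|C i|) ->
  exists g : nat -> T, (forall i, i < t -> g i \in C i) /\
     (forall i j, i < t -> j < t -> g i = g j -> i = j).
Proof.
move=> HC.
suff: forall k, k <= t -> exists g : nat -> T, (forall i, i < k -> g i \in C i) /\
     (forall i j, i < k -> j < k -> g i = g j -> i = j).
  by move/(_ t (leqnn t)).
elim=> [_|k IH Hk].
  by exists (fun _ => x0); split.
have [g [gC ginj]] := IH (ltnW Hk).
pose S := [set g (val i) | i : 'I_k].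
have cS : #|S| <= k by rewrite (leq_trans (leq_imset_card _ _)) // card_ord.
have : ~~ (C k \subset S).
  apply/negP => /subset_leq_card hs.
  have := HC k Hk; lia.
case/subsetPn => x xC xS.
exists (fun i => if i == k then x else g i); split.
  move=> i ik; case: eqP => [->//|/eqP ne].
  by apply: gC; lia.
move=> i j ik jk.
case: eqP => [ei|/eqP ni]; case: eqP => [ej|/eqP nj] //; first by rewrite ei ej.
- move=> hx; case/negP: xS; apply/imsetP.
  have jk' : j < k by lia.
  by exists (Ordinal jk').
- move=> hx; case/negP: xS; apply/imsetP.
  have ik' : i < k by lia.
  by exists (Ordinal ik').
- by apply: ginj; lia.
Qed.
Theorem proposition5p3 (V : finType) (H : {set {set V}})
  (e : nat -> {set V}) :
  hypergraph H -> linear H ->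
  let n := #|V| in
  let t := #|H| - n in
  (forall i, i < 2 * t -> e i \in H) ->
  (forall i j, i < 2 * t -> j < 2 * t -> i != j -> e i != e j) ->
  (forall i j, i < 2 * t -> j < 2 * t -> e i :&: e j != set0) ->
  (forall i, i < t -> useful_pair H (e (2 * i)) (e (2 * i).+1)) ->
  exists c : {set V} -> nat,
    proper_colouring H n c /\
    (forall k, k < n -> #|[set f in H | c f == k]| <= 2).
Proof.
move=> _ _ n t He Hdist Hint Huse.
pose C i := [set f in H | (f :&: e (2*i) == set0) || (f :&: e (2*i).+1 == set0)].
have HC : forall i, i < t -> t <= #|C i|.
  move=> i it; case: (Huse i it) => eH fH nef _ Hc.
  have sub : H \subset (C i :|: (nbhd H (e (2*i)) :&: nbhd H (e (2*i).+1))) :|: [set e (2*i); e (2*i).+1].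
    apply/subsetP => x xH.
    rewrite !inE xH /=.
    case: (x =P e (2*i)) => [->|/eqP n1]; first by rewrite !orbT.
    case: (x =P e (2*i).+1) => [->|/eqP n2]; first by rewrite !orbT.
    rewrite /= !orbF.
    case: (x :&: e (2 * i) =P set0) => //= _.
    by case: (x :&: e (2 * i).+1 =P set0).
  have cU : forall (T : finType) (A B : {set T}), #|A :|: B| <= #|A| + #|B|.
    by move=> T A B; rewrite cardsU leq_subr.
  have c2 : #|[set e (2*i); e (2*i).+1]| <= 2 by rewrite cards2; case: (_ != _).
  have h : #|H| <= #|C i| + (#|nbhd H (e (2 * i)) :&: nbhd H (e (2 * i).+1)| + 2).
    apply: (leq_trans (subset_leq_card sub)); apply: (leq_trans (cU _ _ _)).
    rewrite addnA; apply: leq_add => //; exact: cU.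
  rewrite /t /n leq_subLR; apply: (leq_trans h).
  by rewrite [#|V| + _]addnC leq_add2l.
have [g [gC ginj]] := @greedy _ set0 _ _ HC.
have tE : t = #|H| - n := erefl.
clearbody t n.
pose a i := if g i :&: e (2*i) == set0 then e (2*i) else e (2*i).+1.
pose ja i := if g i :&: e (2*i) == set0 then 2*i else (2*i).+1.
have aE : forall i, a i = e (ja i) by move=> i; rewrite /a /ja; case: ifP.
have jalt : forall i, i < t -> ja i < 2 * t by move=> i it; rewrite /ja; case: ifP; lia.
have jainj : forall i j, ja i = ja j -> i = j by move=> i j; rewrite /ja; do 2 case: ifP; lia.
have gH : forall i, i < t -> g i \in H by move=> i /gC; rewrite inE => /andP[].
have aH : forall i, i < t -> a i \in H by move=> i it; rewrite aE; apply: He; exact: jalt.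
have ag0 : forall i, i < t -> a i :&: g i = set0.
  move=> i it; have := gC i it; rewrite inE /a => /andP[_].
  by case: ifP => [/eqP h _|_ /= /eqP h]; rewrite setIC.
have ang : forall i j, i < t -> j < t -> a i != g j.
  move=> i j it jt; apply/eqP => h.
  have := Hint (ja i) (ja j) (jalt _ it) (jalt _ jt).
  by rewrite -!aE h setIC ag0 // eqxx.
have ainj : forall i j, i < t -> j < t -> a i = a j -> i = j.
  move=> i j it jt; rewrite !aE => h.
  case: (ja i =P ja j) => [/jainj //|/eqP hne].
  by have := Hdist _ _ (jalt _ it) (jalt _ jt) hne; rewrite h eqxx.
pose P := [set a (val i) | i : 'I_t] :|: [set g (val i) | i : 'I_t].
have cardP : #|P| = 2 * t.
  rewrite cardsU.
  have -> : [set a (val i) | i : 'I_t] :&: [set g (val i) | i : 'I_t] = set0.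
    apply/setP => x; rewrite !inE; apply/negP => /andP [/imsetP [i _ ->] /imsetP [j _ /eqP]].
    by rewrite (negbTE (ang _ _ (ltn_ord i) (ltn_ord j))).
  rewrite cards0 subn0 !card_imset ?card_ord; first lia.
  - by move=> i j /ginj h; apply/val_inj; apply: h; exact: ltn_ord.
  - by move=> i j /ainj h; apply/val_inj; apply: h; exact: ltn_ord.
have PH : P \subset H.
  apply/subsetP => x; rewrite inE => /orP [] /imsetP [i _ ->]; [apply: aH|apply: gH]; exact: ltn_ord.
have c2t : 2 * t <= #|H| by rewrite -cardP subset_leq_card.
have cD : #|H :\: P| = #|H| - 2 * t by rewrite cardsD (setIidPr PH) cardP.
have same : forall (i j : 'I_t) f, (a i == f) || (g i == f) -> (a j == f) || (g j == f) -> i = j.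
  move=> i j f /orP [] /eqP <- /orP [] /eqP h; apply/val_inj.
  - exact: ainj (ltn_ord i) (ltn_ord j) (esym h).
  - by move: (ang i j (ltn_ord i) (ltn_ord j)); rewrite h eqxx.
  - by move: (ang j i (ltn_ord j) (ltn_ord i)); rewrite h eqxx.
  - exact: ginj (ltn_ord i) (ltn_ord j) (esym h).
have notP : forall f, (forall i : 'I_t, ((a i == f) || (g i == f)) = false) -> f \notin P.
  move=> f h; apply/negP; rewrite inE => /orP [] /imsetP [i _ fE];
  by have := h i; rewrite fE eqxx ?orbT.
pose s := enum (H :\: P).
have ins : forall f, f \in H -> (forall i : 'I_t, ((a i == f) || (g i == f)) = false) -> f \in s.
  by move=> f fH h; rewrite mem_enum inE fH (notP f h).
have idxlt : forall f, f \in s -> t + index f s < n.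
  move=> f fs; have := index_mem f s; rewrite fs -cardE cD => hi; lia.
pose c f := if [pick i : 'I_t | (a i == f) || (g i == f)] is Some i then nat_of_ord i else t + index f s.
exists c; split; [split|].
- move=> f fH; rewrite /c; case: pickP => [i _|h].
    have := ltn_ord i; lia.
  exact: idxlt (ins f fH h).
- move=> f1 f2 f1H f2H ne int; rewrite /c; case: pickP => [i hi|h1]; case: pickP => [j hj|h2].
  + apply/eqP => /val_inj ij; subst j.
    move: int ne; case/orP: hi => /eqP <-; case/orP: hj => /eqP <-;
      rewrite ?ag0 ?(setIC (g i)) ?ag0 ?eqxx //; exact: ltn_ord.
  + apply/eqP => h; have := ltn_ord i; lia.
  + apply/eqP => h; have := ltn_ord j; lia.
  + apply/eqP => h; have hi : index f1 s = index f2 s by lia.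
    have := nth_index set0 (ins f1 f1H h1); rewrite hi nth_index ?(ins f2 f2H h2) // => h12.
    by move: ne; rewrite h12 eqxx.
- move=> k kn; case: (ltnP k t) => kt.
  + apply: leq_trans (subset_leq_card (_ : _ \subset [set a k; g k])) _.
      apply/subsetP => f; rewrite inE => /andP [fH]; rewrite /c; case: pickP => [i hi /eqP ik|h /eqP]; last lia.
      subst k; rewrite !inE; by case/orP: hi => /eqP ->; rewrite eqxx ?orbT.
    by rewrite cards2; case: (_ != _).
  + apply: leq_trans (_ : _ <= 1) _ => //; apply/card_le1_eqP => f1 f2; rewrite !inE => /andP[f1H c1] /andP[f2H c2].
    move: c1 c2; rewrite /c; case: pickP => [i _|h1]; first by have := ltn_ord i; lia.
    case: pickP => [j _|h2]; first by have := ltn_ord j; lia.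
    move=> /eqP c1 /eqP c2; have hi : index f1 s = index f2 s by apply/eqP; rewrite -(eqn_add2l t) c1 c2.
    have := nth_index set0 (ins f1 f1H h1); rewrite hi nth_index ?(ins f2 f2H h2) //.
Qed.
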